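(* Let $\alpha\in(\frac12,\frac23)$ and $M>0$. Then for every $\varphi\in H^1(\mathbb R^3)$ with $\|\varphi\|_{L^2(\mathbb R^3)}^2=M$, \[ \|\varphi\|_{L^{2\alpha+2}(\mathbb R^3)}^{2\alpha+2}\le \mathrm C_{1/2}^{2-2\alpha}\,\mathrm C_{GN}(1)^{2\alpha-1}\,M^{\alpha-\frac12}\,\|\nabla\varphi\|_{L^2(\mathbb R^3)}^{4\alpha-1}\,D[\varphi]^{1-\alpha}. \]
   Context: $D[u]:=\iint_{\mathbb R^3\times\mathbb R^3}\frac{|u(x)|^2|u(x')|^2}{|x-x'|}\,dx\,dx'$. $\mathrm C_{1/2}$ is the optimal constant in $\|u\|_{L^3}^3\le\mathrm C_{1/2}D[u]^{1/2}\|\nabla u\|_{L^2}$ for all $u\in H^1(\mathbb R^3)$, and $\mathrm C_{GN}(1)$ is the optimal constant in $\|u\|_{L^4}^4\le\mathrm C_{GN}(1)\|\nabla u\|_{L^2}^3\|u\|_{L^2}$ for all $u\in H^1(\mathbb R^3)$. *)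

(* Defs.v *)
From HB Require Import structures.
From mathcomp Require Import all_boot all_order all_algebra.
From mathcomp Require Import all_classical all_reals all_analysis.
Set Implicit Arguments. Unset Strict Implicit. Unset Printing Implicit Defensive.
Import Order.TTheory GRing.Theory Num.Theory.
Import numFieldNormedType.Exports.
Local Open Scope classical_set_scope.
Local Open Scope ring_scope.

Section Defs.
Variable R : realType.

Definition R3 := ((R * R) * R)%type.

Definition leb3 := ((@lebesgue_measure R \x @lebesgue_measure R) \x @lebesgue_measure R)%E.

Definition e3 (i : 'I_3) : R3 :=
  if val i == 0%N then ((1, 0), 0) else if val i == 1%N then ((0, 1), 0) else ((0, 0), 1).

Definition enorm3 (x : R3) : R := Num.sqrt (x.1.1 ^+ 2 + x.1.2 ^+ 2 + x.2 ^+ 2).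

Definition pd (i : 'I_3) (f : R3 -> R) : R3 -> R := fun x => 'D_(e3 i) f x.

Definition pds (ds : seq 'I_3) (f : R3 -> R) : R3 -> R := foldr pd f ds.

Definition test_fun (phi : R3 -> R) : Prop :=
  (forall (ds : seq 'I_3), continuous (pds ds phi) /\
     forall (i : 'I_3) (x : R3), derivable (pds ds phi) x (e3 i)) /\
  compact (closure [set x | phi x != 0]).

Definition L2 (f : R3 -> R) : Prop :=
  measurable_fun setT f /\ (\int[leb3]_x ((f x) ^+ 2)%:E < +oo)%E.

Definition weak_partial (i : 'I_3) (u g : R3 -> R) : Prop :=
  forall phi, test_fun phi ->
    (\int[leb3]_x (u x * pd i phi x)%:E = - \int[leb3]_x (g x * phi x)%:E)%E.

Definition H1r (u : R3 -> R) (gu : 'I_3 -> R3 -> R) : Prop :=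
  L2 u /\ forall i, L2 (gu i) /\ weak_partial i u (gu i).

(* complex-valued H^1 function phi = u + i v with weak gradient gu + i gv *)
Definition H1 (u v : R3 -> R) (gu gv : 'I_3 -> R3 -> R) : Prop :=
  H1r u gu /\ H1r v gv.

Definition modsq (u v : R3 -> R) (x : R3) : R := u x ^+ 2 + v x ^+ 2.

Definition Lp_pow (p : R) (u v : R3 -> R) : \bar R :=
  (\int[leb3]_x ((modsq u v x) `^ (p / 2))%:E)%E.

Definition L2sq (u v : R3 -> R) : \bar R := (\int[leb3]_x (modsq u v x)%:E)%E.

Definition grad_norm (gu gv : 'I_3 -> R3 -> R) : \bar R :=
  ((\int[leb3]_x (\sum_(i < 3) (gu i x ^+ 2 + gv i x ^+ 2))%:E) `^ (2^-1))%E.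

Definition Dcoul (u v : R3 -> R) : \bar R :=
  (\int[(leb3 \x leb3)%E]_xy
     (modsq u v xy.1 * modsq u v xy.2 / enorm3 (xy.1 - xy.2))%:E)%E.

Definition C_half_admissible (C : R) : Prop :=
  forall u v gu gv, H1 u v gu gv ->
    (Lp_pow 3 u v <= C%:E * (Dcoul u v) `^ (2^-1) * grad_norm gu gv)%E.

Definition is_C_half (C : R) : Prop :=
  C_half_admissible C /\ forall C', C_half_admissible C' -> C <= C'.

Definition C_GN1_admissible (C : R) : Prop :=
  forall u v gu gv, H1 u v gu gv ->
    (Lp_pow 4 u v <= C%:E * (grad_norm gu gv) `^ 3 * (L2sq u v) `^ (2^-1))%E.

Definition is_C_GN1 (C : R) : Prop :=
  C_GN1_admissible C /\ forall C', C_GN1_admissible C' -> C <= C'.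

End Defs.

(* Main.v *)
Require Import Defs.
From HB Require Import structures.
From mathcomp Require Import all_boot all_order all_algebra.
From mathcomp Require Import all_classical all_reals all_analysis.
From mathcomp Require Import lra measurable_realfun.
Import Order.TTheory GRing.Theory Num.Theory.
Import numFieldNormedType.Exports.
Local Open Scope ring_scope.

Lemma Lnorm_pow d (T : measurableType d) (R : realType)
  (mu : {measure set T -> \bar R}) (f : T -> R) (c k : R) :
  (forall x, 0 <= f x) -> 0 < c ->
  Lnorm mu (c^-1)%:E (EFin \o (fun x => f x `^ (c * k))) =
  ((\int[mu]_x (f x `^ k)%:E) `^ c)%E.
Proof.
move=> f0 c0.
rewrite -[LHS](poweRe1 (Lnorm_ge0 _ _ _)).
rewrite -[X in (_ `^ X)%E](mulVf (lt0r_neq0 c0)) poweRrM poweR_Lnorm ?invr_neq0 ?gt_eqF //.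
congr (_ `^ _)%E; apply: eq_integral => x _ /=.
rewrite ger0_norm ?powR_ge0 // -powRrM.
by rewrite mulrC mulrA mulVf ?mul1r // lt0r_neq0.
Qed.

Lemma interp d (T : measurableType d) (R : realType)
  (mu : {measure set T -> \bar R}) (f : T -> R) (a b r s : R) :
  measurable_fun setT f -> (forall x, 0 <= f x) -> 0 < a -> 0 < b -> a + b = 1 ->
  0 < r -> 0 < s ->
  (\int[mu]_x (f x `^ (a * r + b * s))%:E <=
   (\int[mu]_x (f x `^ r)%:E) `^ a * (\int[mu]_x (f x `^ s)%:E) `^ b)%E.
Proof.
move=> mf f0 a0 b0 ab r0 s0.
have mp : forall e, measurable_fun setT (fun x => f x `^ e).
  by move=> e; apply: (measurableT_comp (measurable_powR _)).
have H := hoelder mu (mp (a * r)) (mp (b * s)) (_ : 0 < a^-1) (_ : 0 < b^-1).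
have {H} := H (ltac:(by rewrite invr_gt0)) (ltac:(by rewrite invr_gt0)).
move=> H.
rewrite !invrK in H; have {H} := H ab.
rewrite Lnorm1 !Lnorm_pow //.
apply: le_trans; rewrite le_eqVlt; apply/orP; left; apply/eqP.
apply: eq_integral => x _ /=.
rewrite ger0_norm ?mulr_ge0 ?powR_ge0 // powRD //.
by rewrite gt_eqF ?implybT // addr_gt0 // mulr_gt0.
Qed.
Lemma ereal_AC6 (R : realType) (p1 p2 p3 p4 p5 p6 : \bar R) :
  (p1 * p2 * p3 * (p4 * p5 * p6) = p1 * p4 * p6 * (p3 * p5) * p2)%E.
Proof.
rewrite -!muleA; congr (_ * _)%E.
rewrite [in RHS](muleC p5 p2) [in RHS](muleCA p3 p2) [in RHS](muleCA p6 p2).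
rewrite [in RHS](muleCA p4 p2); congr (_ * _)%E.
by rewrite [in RHS](muleC p6) -[in RHS](muleA p3) [in RHS]muleCA.
Qed.

Lemma final (R : realType) (X Y G D : \bar R) (C1 C2 M a b : R) :
  (0 <= X)%E -> (0 <= Y)%E -> (0 <= G)%E -> 0 < a -> 0 < b -> 0 < M ->
  (X <= C1%:E * D `^ (2^-1) * G)%E -> (Y <= C2%:E * G `^ 3 * (M%:E) `^ (2^-1))%E ->
  (X `^ a * Y `^ b <= (C1 `^ a)%:E * (C2 `^ b)%:E * (M `^ (2^-1 * b))%:E
     * G `^ (a + 3 * b) * D `^ (2^-1 * a))%E.
Proof.
move=> X0 Y0 G0 a0 b0 M0 HX HY.
have RHS0 : (0 <= (C1 `^ a)%:E * (C2 `^ b)%:E * (M `^ (2^-1 * b))%:E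
     * G `^ (a + 3 * b) * D `^ (2^-1 * a))%E.
  by rewrite !mule_ge0 ?poweR_ge0 ?lee_fin ?powR_ge0.
have [->|Xn0] := eqVneq X 0%E.
  by rewrite poweR0r ?lt0r_neq0 // mul0e.
have [->|Yn0] := eqVneq Y 0%E.
  by rewrite (poweR0r (lt0r_neq0 b0)) mule0.
have Xp : (0 < X)%E by rewrite lt0e Xn0.
have Yp : (0 < Y)%E by rewrite lt0e Yn0.
have C1p : 0 < C1.
  rewrite ltNge; apply/negP => C1n.
  have : (C1%:E * D `^ (2^-1) * G <= 0)%E.
    by rewrite -muleA mule_le0_ge0 ?lee_fin // mule_ge0 // poweR_ge0.
  move=> H; have := lt_le_trans Xp (le_trans HX H); by rewrite ltxx.
have C2p : 0 < C2.
  rewrite ltNge; apply/negP => C2n.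
  have : (C2%:E * G `^ 3 * (M%:E) `^ (2^-1) <= 0)%E.
    by rewrite -muleA mule_le0_ge0 ?lee_fin // mule_ge0 // poweR_ge0.
  move=> H; have := lt_le_trans Yp (le_trans HY H); by rewrite ltxx.
have inI : forall z : \bar R, (0 <= z)%E -> z \in `[0%E, +oo%E].
  by move=> z z0; rewrite in_itv /= z0 leey.
have le1 := gt0_ler_poweR (ltW a0) (inI _ X0) (inI _ (le_trans X0 HX)) HX.
have le2 := gt0_ler_poweR (ltW b0) (inI _ Y0) (inI _ (le_trans Y0 HY)) HY.
apply: le_trans (lee_pmul (poweR_ge0 _ _) (poweR_ge0 _ _) le1 le2) _.
rewrite !poweRM ?mule_ge0 ?poweR_ge0 ?lee_fin ?(ltW C1p) ?(ltW C2p) //.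
rewrite !poweR_EFin -!powRrM -!poweRrM.
rewrite (poweRD (add_neq0_poweRD_def _ _)); last first.
  by rewrite lt0r_neq0 // addr_gt0 // mulr_gt0.
rewrite le_eqVlt; apply/orP; left; apply/eqP.
rewrite ereal_AC6.
by [].
Qed.

Lemma int_ge0' d (T : measurableType d) (R : realType)
  (mu : {measure set T -> \bar R}) (g : T -> R) :
  (forall x, 0 <= g x) -> (0 <= \int[mu]_x (g x)%:E)%E.
Proof. by move=> g0; apply: integral_ge0 => x _; rewrite lee_fin. Qed.

Theorem corollary2p7 (R : realType) (alpha M C1 C2 : R) :
  2^-1 < alpha -> alpha < 2 / 3 -> 0 < M ->
  is_C_half C1 -> is_C_GN1 C2 ->
  forall (u v : R3 R -> R) (gu gv : 'I_3 -> R3 R -> R),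
    H1 u v gu gv -> L2sq u v = M%:E ->
    (Lp_pow (2 * alpha + 2) u v <=
       (C1 `^ (2 - 2 * alpha))%:E * (C2 `^ (2 * alpha - 1))%:E
       * (M `^ (alpha - 2^-1))%:E
       * (grad_norm gu gv) `^ (4 * alpha - 1)
       * (Dcoul u v) `^ (1 - alpha))%E.
Proof.
move=> ha1 ha2 M0 [hC1 _] [hC2 _] u v gu gv H HM.
have HX := hC1 u v gu gv H.
have HY := hC2 u v gu gv H.
rewrite HM in HY.
have mu : measurable_fun setT u by case: H => [[[]]].
have mv : measurable_fun setT v by case: H => [_ [[]]].
have mf : measurable_fun setT (modsq u v).
  by apply: measurable_funD; apply: measurable_funX.
have f0 : forall x, 0 <= modsq u v x.
  by move=> x; rewrite /modsq addr_ge0 // sqr_ge0.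
set a := 2 - 2 * alpha; set b := 2 * alpha - 1.
have a0 : 0 < a by rewrite /a; lra.
have b0 : 0 < b by rewrite /b; lra.
have I := @interp _ _ _ (@leb3 R) _ a b (3 / 2) (4 / 2) mf f0 a0 b0.
have {I} := I (ltac:(rewrite /a /b; lra)) (ltac:(lra)) (ltac:(lra)).
rewrite (_ : a * (3 / 2) + b * (4 / 2) = (2 * alpha + 2) / 2); last first.
  by rewrite /a /b; lra.
move=> I; rewrite /Lp_pow; apply: (le_trans I).
have G0 : (0 <= grad_norm gu gv)%E by rewrite /grad_norm; exact: poweR_ge0.
have X0 : (0 <= Lp_pow 3 u v)%E.
  rewrite /Lp_pow; apply: (@int_ge0' _ _ R (@leb3 R)) => x; exact: powR_ge0.
have Y0 : (0 <= Lp_pow 4 u v)%E.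
  rewrite /Lp_pow; apply: (@int_ge0' _ _ R (@leb3 R)) => x; exact: powR_ge0.
have := @final _ _ _ _ _ _ _ _ _ _ X0 Y0 G0 a0 b0 M0 HX HY.
rewrite /Lp_pow.
rewrite (_ : 2^-1 * b = alpha - 2^-1); last by rewrite /b; lra.
rewrite (_ : a + 3 * b = 4 * alpha - 1); last by rewrite /a /b; lra.
by rewrite (_ : 2^-1 * a = 1 - alpha); last by rewrite /a; lra.
Qed.
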